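(* Let $\bm\sigma=\sigma_1\bm e_1+\dots+\sigma_r\bm e_r\in\mathbb{Z}^r$ be a changemaker vector with non-trivial stable coefficients ($\sigma_r\ge2$) such that $L=\langle\bm\sigma\rangle^\perp\subseteq\mathbb{Z}^r$ admits an obtuse superbase. Suppose that for some $k$ the coefficients satisfy $\sigma_k=\sigma_{k+1}=\sigma_{k+2}=\sigma_{k+3}$. If $\bm z=\sum z_i\bm e_i\in L$ is an irreducible vector with $z_k=z_{k+1}$ and $z_{k+2}=z_{k+3}$, then $z_{k+2}=z_{k+1}$.
   Context: $\mathbb{Z}^r$ has the standard pairing. A changemaker vector is $\bm\sigma=\sum\sigma_i\bm e_i$ with $\sigma_1=1$ and $\sigma_{i-1}\le\sigma_i\le1+\sigma_1+\dots+\sigma_{i-1}$. An obtuse superbase of a rank-$k$ lattice is a spanning set $\{v_0,\dots,v_k\}$ with $v_i\cdot v_j\le0$ for $i\ne j$ and $\sum v_i=0$. A non-zero $v\in L$ is irreducible if whenever $v=x+y$ with $x,y\in L$ non-zero, $x\cdot y\le -1$. *)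

(* Defs.v *)
(* Vectors of Z^r are row vectors 'rV[int]_r, coordinates
   indexed 0-based by 'I_r (paper's e_{i+1} is our index i). *)
From mathcomp Require Import all_boot all_order all_algebra.
Set Implicit Arguments. Unset Strict Implicit. Unset Printing Implicit Defensive.
Import Order.TTheory GRing.Theory Num.Theory.
Local Open Scope ring_scope.

Definition dotz (r : nat) (x y : 'rV[int]_r) : int := \sum_(i < r) x ord0 i * y ord0 i.

Definition changemaker (r : nat) (s : 'rV[int]_r) : Prop :=
  (forall i : 'I_r, val i = 0%N -> s ord0 i = 1) /\
  (forall i j : 'I_r, val j = (val i).+1 ->
     s ord0 i <= s ord0 j /\
     s ord0 j <= 1 + \sum_(l < r | (val l < val j)%N) s ord0 l).

Definition orth_lattice (r : nat) (s : 'rV[int]_r) (x : 'rV[int]_r) : Prop :=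
  dotz x s = 0.

Definition obtuse_superbase (r n : nat) (L : 'rV[int]_r -> Prop)
    (v : 'I_n.+1 -> 'rV[int]_r) : Prop :=
  (forall i, L (v i)) /\
  (forall x, L x -> exists c : 'I_n.+1 -> int, x = \sum_(i < n.+1) c i *: v i) /\
  (forall i j, i != j -> dotz (v i) (v j) <= 0) /\
  \sum_(i < n.+1) v i = 0.

Definition irreducible_vec (r : nat) (L : 'rV[int]_r -> Prop) (v : 'rV[int]_r) : Prop :=
  L v /\ v != 0 /\
  (forall x y, L x -> L y -> x != 0 -> y != 0 -> v = x + y -> dotz x y <= -1).

(* Main.v *)
Require Import Defs.
From mathcomp Require Import all_boot all_order all_algebra.
From mathcomp Require Import zify ring.
Set Implicit Arguments. Unset Strict Implicit. Unset Printing Implicit Defensive.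
Import Order.TTheory GRing.Theory Num.Theory.
Local Open Scope ring_scope.

Section Dot.
Variable r : nat.
Implicit Types x y u : 'rV[int]_r.

Lemma dotzC x y : dotz x y = dotz y x.
Proof. by apply: eq_bigr => i _; rewrite mulrC. Qed.

Lemma dotzDl x y u : dotz (x + y) u = dotz x u + dotz y u.
Proof. by rewrite /dotz -big_split; apply: eq_bigr => i _; rewrite !mxE mulrDl. Qed.

Lemma dotzNl x u : dotz (- x) u = - dotz x u.
Proof. by rewrite /dotz -sumrN; apply: eq_bigr => i _; rewrite !mxE mulNr. Qed.

Lemma dotzBl x y u : dotz (x - y) u = dotz x u - dotz y u.
Proof. by rewrite dotzDl dotzNl. Qed.

Lemma dotzZl (c : int) x u : dotz (c *: x) u = c * dotz x u.
Proof. by rewrite /dotz mulr_sumr; apply: eq_bigr => i _; rewrite !mxE mulrA. Qed.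

Lemma dotz0l u : dotz 0 u = 0.
Proof. by rewrite /dotz big1 // => i _; rewrite mxE mul0r. Qed.

Lemma dotz_suml m (f : 'I_m -> 'rV[int]_r) u :
  dotz (\sum_(i < m) f i) u = \sum_(i < m) dotz (f i) u.
Proof.
elim/big_rec2: _ => [|i a b _ <-]; first by rewrite dotz0l.
by rewrite dotzDl.
Qed.

Lemma dotzDr x y u : dotz u (x + y) = dotz u x + dotz u y.
Proof. by rewrite dotzC dotzDl !(dotzC u). Qed.
Lemma dotzBr x y u : dotz u (x - y) = dotz u x - dotz u y.
Proof. by rewrite dotzC dotzBl !(dotzC u). Qed.
Lemma dotzZr (c : int) x u : dotz u (c *: x) = c * dotz u x.
Proof. by rewrite dotzC dotzZl dotzC. Qed.
Lemma dotzNr x u : dotz u (- x) = - dotz u x.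
Proof. by rewrite dotzC dotzNl dotzC. Qed.
Lemma dotz_sumr m (f : 'I_m -> 'rV[int]_r) u :
  dotz u (\sum_(i < m) f i) = \sum_(i < m) dotz u (f i).
Proof. by rewrite dotzC dotz_suml; apply: eq_bigr => i _; rewrite dotzC. Qed.

Lemma dotz_ge0 x : 0 <= dotz x x.
Proof. by apply: sumr_ge0 => i _; rewrite -expr2 sqr_ge0. Qed.

Lemma dotz_eq0 x : dotz x x = 0 -> x = 0.
Proof.
move=> /eqP; rewrite psumr_eq0 => [/allP H|i _]; last by rewrite -expr2 sqr_ge0.
apply/rowP => i; rewrite mxE.
have := H i (mem_index_enum i); rewrite -expr2 sqrf_eq0 => /eqP ->.
by [].
Qed.

End Dot.

Definition wt r m (v : 'I_m -> 'rV[int]_r) (i j : 'I_m) : int :=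
  if i == j then 0 else - dotz (v i) (v j).
Definition pot r m (v : 'I_m -> 'rV[int]_r) (f : 'I_m -> int) : 'rV[int]_r :=
  \sum_(i < m) f i *: v i.

Lemma wt_sym r m (v : 'I_m -> 'rV[int]_r) i j : wt v i j = wt v j i.
Proof. by rewrite /wt eq_sym dotzC. Qed.

Lemma dot_pot_l r m (v : 'I_m -> 'rV[int]_r) f u :
  dotz (pot v f) u = \sum_i f i * dotz (v i) u.
Proof. by rewrite /pot dotz_suml; apply: eq_bigr => i _; rewrite dotzZl. Qed.

Lemma dot_pot_r r m (v : 'I_m -> 'rV[int]_r) f u :
  dotz u (pot v f) = \sum_i f i * dotz u (v i).
Proof. by rewrite dotzC dot_pot_l; apply: eq_bigr => i _; rewrite dotzC. Qed.

Lemma M_wt r m (v : 'I_m -> 'rV[int]_r) (hsum : \sum_(i < m) v i = 0) i j :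
  dotz (v i) (v j) = (i == j)%:R * (\sum_k wt v i k) - wt v i j.
Proof.
rewrite /wt; case: eqP => [<-|_]; last by rewrite mul0r sub0r opprK.
rewrite mul1r subr0 (bigD1 i) //= eqxx add0r.
have : \sum_k dotz (v i) (v k) = 0 by rewrite -dotz_sumr hsum dotzC dotz0l.
rewrite (bigD1 i) //= => H.
have -> : \sum_(k < m | k != i) (if i == k then 0 else - dotz (v i) (v k)) =
          - \sum_(k < m | k != i) dotz (v i) (v k).
  rewrite -sumrN; apply: eq_bigr => k /negPf; rewrite eq_sym => ->; by [].
by move/eqP: H; rewrite addr_eq0 => /eqP.
Qed.

Lemma pot_dot r m (v : 'I_m -> 'rV[int]_r) (hsum : \sum_(i < m) v i = 0) f g :
  2 * dotz (pot v f) (pot v g) =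
  \sum_i \sum_j wt v i j * ((f i - f j) * (g i - g j)).
Proof.
have E1 : dotz (pot v f) (pot v g) = \sum_i \sum_j wt v i j * (f i * (g i - g j)).
  rewrite dot_pot_l; apply: eq_bigr => i _; rewrite dot_pot_r mulr_sumr.
  transitivity (\sum_j (f i * g j * ((i == j)%:R * \sum_k wt v i k)) - \sum_j (f i * g j * wt v i j)).
    by rewrite -sumrB; apply: eq_bigr => j _; rewrite M_wt //; ring.
  rewrite [X in X - _](bigD1 i) //= eqxx mul1r.
  rewrite [X in _ + X - _]big1 ?addr0; last first.
    by move=> j /negPf H; rewrite eq_sym H mul0r mulr0.
  rewrite mulr_sumr -sumrB; apply: eq_bigr => j _; ring.
have E2 : \sum_i \sum_j wt v i j * ((f i - f j) * (g i - g j)) =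
   \sum_i \sum_j wt v i j * (f i * (g i - g j)) +
   \sum_i \sum_j wt v i j * (f j * (g j - g i)).
  rewrite -big_split; apply: eq_bigr => i _; rewrite -big_split; apply: eq_bigr => j _ /=.
  rewrite -mulrDr; congr (_ * _); ring.
rewrite E2.
have -> : \sum_i \sum_j wt v i j * (f j * (g j - g i)) =
          \sum_i \sum_j wt v i j * (f i * (g i - g j)).
  rewrite exchange_big /=; apply: eq_bigr => i _; apply: eq_bigr => j _.
  by rewrite wt_sym.
rewrite -E1; ring.
Qed.


Lemma potD r m (v : 'I_m -> 'rV[int]_r) f g :
  pot v f + pot v g = pot v (fun i => f i + g i).
Proof. by rewrite /pot -big_split; apply: eq_bigr => i _; rewrite scalerDl. Qed.

Lemma pot_shift r m (v : 'I_m -> 'rV[int]_r) (hsum : \sum_(i < m) v i = 0) f c :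
  pot v (fun i => f i - c) = pot v f.
Proof.
rewrite /pot (eq_bigr (fun i => f i *: v i - c *: v i)); last by move=> i _; rewrite scalerBl.
by rewrite sumrB -scaler_sumr hsum scaler0 subr0.
Qed.

Lemma orthD r (s x y : 'rV[int]_r) :
  orth_lattice s x -> orth_lattice s y -> orth_lattice s (x + y).
Proof. by rewrite /orth_lattice dotzDl => -> ->; rewrite addr0. Qed.
Lemma orthN r (s x : 'rV[int]_r) : orth_lattice s x -> orth_lattice s (- x).
Proof. by rewrite /orth_lattice dotzNl => ->; rewrite oppr0. Qed.
Lemma orthB r (s x y : 'rV[int]_r) :
  orth_lattice s x -> orth_lattice s y -> orth_lattice s (x - y).
Proof. by move=> hx hy; apply: orthD => //; apply: orthN. Qed.

Lemma orth_pot r (s : 'rV[int]_r) m (v : 'I_m -> 'rV[int]_r)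
  (hL : forall i, orth_lattice s (v i)) f : orth_lattice s (pot v f).
Proof.
rewrite /orth_lattice dot_pot_l big1 // => i _; by rewrite hL mulr0.
Qed.

Lemma wt_ge0 r m (v : 'I_m -> 'rV[int]_r)
  (hob : forall i j, i != j -> dotz (v i) (v j) <= 0) i j : 0 <= wt v i j.
Proof. rewrite /wt; case: eqP => // /eqP H; rewrite oppr_ge0; exact: hob. Qed.

Lemma lemG r (s : 'rV[int]_r) m (v : 'I_m -> 'rV[int]_r)
  (hL : forall i, orth_lattice s (v i))
  (hspan : forall x, orth_lattice s x -> exists c : 'I_m -> int, x = \sum_(i < m) c i *: v i)
  (hob : forall i j, i != j -> dotz (v i) (v j) <= 0)
  (hsum : \sum_(i < m) v i = 0) z :
  irreducible_vec (orth_lattice s) z ->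
  exists p : 'I_m -> int, (forall i, p i = 0 \/ p i = 1) /\ z = pot v p.
Proof.
move=> [hzL [hz0 hirr]].
have main : forall M : nat, forall f : 'I_m -> int, (forall i, 0 <= f i <= M%:Z) ->
    z = pot v f -> exists p : 'I_m -> int, (forall i, p i = 0 \/ p i = 1) /\ z = pot v p.
  elim=> [|M IH] f hf hzf.
    exists f; split => // i; have := hf i; lia.
  pose ind i : int := if 0 < f i then 1 else 0.
  pose d i : int := f i - ind i.
  have hzxy : z = pot v ind + pot v d.
    rewrite potD hzf /pot; apply: eq_bigr => i _; congr (_ *: _); rewrite /d; ring.
  have [hy0|hy0] := eqVneq (pot v d) 0.
    exists ind; split; first by move=> i; rewrite /ind; case: ifP; auto.
    by rewrite hzxy hy0 addr0.
  have [hx0|hx0] := eqVneq (pot v ind) 0.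
    apply: (IH d) => [i|]; last by rewrite hzxy hx0 add0r.
    have := hf i; rewrite /d /ind; case: ifP; lia.
  have := hirr _ _ (orth_pot hL ind) (orth_pot hL d) hx0 hy0 hzxy.
  have : 0 <= 2 * dotz (pot v ind) (pot v d).
    rewrite pot_dot //; apply: sumr_ge0 => i _; apply: sumr_ge0 => j _.
    apply: mulr_ge0; first exact: wt_ge0.
    have := hf i; have := hf j; rewrite /d /ind; case: ifP; case: ifP; nia.
  lia.
have [c hc] := hspan z hzL.
pose lo : int := - \sum_i `|c i|.
pose f i := c i - lo.
have hf0 : forall i, 0 <= f i.
  move=> i; rewrite /f /lo opprK.
  have : `|c i| <= \sum_i `|c i|.
    by rewrite (bigD1 i) //= lerDl; apply: sumr_ge0 => j _; exact: normr_ge0.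
  have := ler_norm (- c i); rewrite normrN. lia.
have hS : 0 <= \sum_i f i by apply: sumr_ge0 => i _; exact: hf0.
have hzf : z = pot v f by rewrite /f pot_shift.
apply: (main (absz (\sum_i f i)) f _ hzf) => i.
rewrite hf0 /= gez0_abs //.
by rewrite (bigD1 i) //= lerDl; apply: sumr_ge0 => j _; exact: hf0.
Qed.

Lemma cm_pos r (s : 'rV[int]_r) : changemaker s -> forall l : 'I_r, 1 <= s ord0 l.
Proof.
move=> [h0 hstep].
have H : forall k (l : 'I_r), val l = k -> 1 <= s ord0 l.
  elim=> [|k IH] l hl; first by rewrite h0.
  have hk : (k < r)%N by have := ltn_ord l; rewrite hl; lia.
  have [le _] := hstep (Ordinal hk) l hl.
  exact: le_trans (IH (Ordinal hk) erefl) le.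
by move=> l; apply: (H (val l)).
Qed.

Lemma minnorm r (s : 'rV[int]_r) : changemaker s ->
  forall x, orth_lattice s x -> dotz x x <> 1.
Proof.
move=> hcm x hx hxx.
case: (pickP (fun l => x ord0 l != 0)) => [l /= hl|H]; last first.
  move: hxx; rewrite /dotz big1 // => l _; have := H l; rewrite /= => /negbFE/eqP ->.
  by rewrite mul0r.
have E := hxx; rewrite /dotz (bigD1 l) //= in E.
move: E; set R := (X in _ + X = 1) => E.
have R0 : 0 <= R by apply: sumr_ge0 => j _; rewrite -expr2 sqr_ge0.
have hl2 : 1 <= x ord0 l * x ord0 l.
  by move: hl; rewrite -expr2; case: (x ord0 l) => [[|n]|n] //; lia.
have R00 : R = 0 by lia.
have hoth : forall j, j != l -> x ord0 j = 0.
  move=> j hj; move/eqP: R00; rewrite psumr_eq0; last by move=> k _; rewrite -expr2 sqr_ge0.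
  by move/allP => /(_ j (mem_index_enum j)); rewrite hj /= -expr2 sqrf_eq0 => /eqP.
move: hx; rewrite /orth_lattice /dotz (bigD1 l) //= big1 ?addr0; last first.
  by move=> j hj; rewrite hoth // mul0r.
have := cm_pos hcm l. move: hl; rewrite -expr2 in hl2.
move=> hl hs /eqP; rewrite mulf_eq0 (negPf hl) /=. lia.
Qed.

Lemma dotz_xx_ge2 r (s : 'rV[int]_r) : changemaker s ->
  forall x, orth_lattice s x -> x != 0 -> 2 <= dotz x x.
Proof.
move=> hcm x hx hx0.
have h1 := minnorm hcm hx. have h0 := dotz_ge0 x.
have : dotz x x != 0 by apply: contra hx0 => /eqP /dotz_eq0 ->.
lia.
Qed.

Lemma root_irr r (s : 'rV[int]_r) : changemaker s ->
  forall t, orth_lattice s t -> dotz t t = 2 -> irreducible_vec (orth_lattice s) t.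
Proof.
move=> hcm t ht htt; split => //; split.
  by apply/eqP => t0; move: htt; rewrite t0 dotz0l.
move=> x y hx hy hx0 hy0 E.
have := dotz_xx_ge2 hcm hx hx0; have := dotz_xx_ge2 hcm hy hy0.
move: htt; rewrite E dotzDl !dotzDr (dotzC y x). lia.
Qed.

Lemma sum_if_eq (a n : nat) (X : nat -> int) : (a < n)%N ->
  \sum_(0 <= s < n) (if s == a then X s else 0) = X a.
Proof. by move=> h; rewrite -big_mkcond big_nat1_eq /= h. Qed.

Lemma sym_sum n (X : nat -> nat -> int) :
  (forall s t, X s t = X t s) -> (forall s, X s s = 0) ->
  \sum_(0 <= s < n) \sum_(0 <= t < n) X s t =
  2 * \sum_(0 <= s < n) \sum_(0 <= t < n) (if (s < t)%N then X s t else 0).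
Proof.
move=> hs hd.
have E : forall s t, X s t = (if (s < t)%N then X s t else 0) + (if (t < s)%N then X t s else 0).
  move=> s t; case: (ltngtP s t) => [h|h|->].
  - by rewrite addr0.
  - by rewrite add0r.
  - by rewrite hd addr0.
rewrite (eq_bigr (fun s => \sum_(0 <= t < n) ((if (s < t)%N then X s t else 0) +
                                             (if (t < s)%N then X t s else 0)))); last first.
  by move=> s _; apply: eq_bigr => t _; rewrite -E.
under eq_bigr do rewrite big_split /=.
rewrite big_split /= [X in _ + X]exchange_big /=.
by rewrite mulr2n mulrDl mul1r.
Qed.

Definition Wt r m (v : 'I_m -> 'rV[int]_r) (tau : 'I_m -> nat) (s t : nat) : int :=
  \sum_i \sum_j (if (s == tau i) && (t == tau j) then wt v i j else 0).

Lemma type_red r m (v : 'I_m -> 'rV[int]_r) (tau : 'I_m -> nat)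
  (htau : forall i, (tau i < 16)%N) (F G : nat -> int) :
  \sum_i \sum_j wt v i j * ((F (tau i) - F (tau j)) * (G (tau i) - G (tau j))) =
  \sum_(0 <= s < 16) \sum_(0 <= t < 16) Wt v tau s t * ((F s - F t) * (G s - G t)).
Proof.
set H := fun s t => (F s - F t) * (G s - G t).
have inner : forall i j, wt v i j * H (tau i) (tau j) =
   \sum_(0 <= s < 16) \sum_(0 <= t < 16)
      (if (s == tau i) && (t == tau j) then wt v i j * H s t else 0).
  move=> i j.
  rewrite (eq_bigr (fun s => if s == tau i then wt v i j * H s (tau j) else 0)); last first.
    move=> s _; case: eqP => _ /=; last by rewrite big1.
    by rewrite (sum_if_eq (fun t => wt v i j * H s t)).
  by rewrite (sum_if_eq (fun s => wt v i j * H s (tau j))).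
rewrite (eq_bigr (fun i => \sum_j \sum_(0 <= s < 16) \sum_(0 <= t < 16)
      (if (s == tau i) && (t == tau j) then wt v i j * H s t else 0))); last first.
  by move=> i _; apply: eq_bigr => j _; rewrite inner.
rewrite (eq_bigr (fun i => \sum_(0 <= s < 16) \sum_(0 <= t < 16) \sum_j
      (if (s == tau i) && (t == tau j) then wt v i j * H s t else 0))); last first.
  move=> i _; rewrite exchange_big /=; apply: eq_bigr => s _; by rewrite exchange_big.
rewrite exchange_big /=; apply: eq_bigr => s _; rewrite exchange_big /=.
apply: eq_bigr => t _; rewrite /Wt mulr_suml; apply: eq_bigr => i _.
rewrite mulr_suml; apply: eq_bigr => j _.
by case: ifP; rewrite ?mul0r.
Qed.

Definition Q (W : nat -> nat -> int) (F G : nat -> int) : int :=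
  \sum_(0 <= s < 16) \sum_(0 <= t < 16)
     (if (s < t)%N then W s t * ((F s - F t) * (G s - G t)) else 0).

Definition Fp (s : nat) : int :=
  match s with
  | 0 => 0
  | 1 => 1
  | 2 => 0
  | 3 => 1
  | 4 => 0
  | 5 => 1
  | 6 => 0
  | 7 => 1
  | 8 => 0
  | 9 => 1
  | 10 => 0
  | 11 => 1
  | 12 => 0
  | 13 => 1
  | 14 => 0
  | 15 => 1
  | _ => 0 end.
Definition Fx (s : nat) : int :=
  match s with
  | 0 => 0
  | 1 => 0
  | 2 => 1
  | 3 => 1
  | 4 => 0
  | 5 => 0
  | 6 => 1
  | 7 => 1
  | 8 => 0
  | 9 => 0
  | 10 => 1
  | 11 => 1
  | 12 => 0
  | 13 => 0
  | 14 => 1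
  | 15 => 1
  | _ => 0 end.
Definition Fa (s : nat) : int :=
  match s with
  | 0 => 0
  | 1 => 0
  | 2 => 0
  | 3 => 0
  | 4 => 1
  | 5 => 1
  | 6 => 1
  | 7 => 1
  | 8 => 0
  | 9 => 0
  | 10 => 0
  | 11 => 0
  | 12 => 1
  | 13 => 1
  | 14 => 1
  | 15 => 1
  | _ => 0 end.
Definition Fb (s : nat) : int :=
  match s with
  | 0 => 0
  | 1 => 0
  | 2 => 0
  | 3 => 0
  | 4 => 0
  | 5 => 0
  | 6 => 0
  | 7 => 0
  | 8 => 1
  | 9 => 1
  | 10 => 1
  | 11 => 1
  | 12 => 1
  | 13 => 1
  | 14 => 1
  | 15 => 1
  | _ => 0 end.
Definition M0 (s : nat) : int :=
  match s with
  | 0 => 0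
  | 1 => 0
  | 2 => 0
  | 3 => 0
  | 4 => 0
  | 5 => 0
  | 6 => 0
  | 7 => 0
  | 8 => 1
  | 9 => 1
  | 10 => 0
  | 11 => 0
  | 12 => 1
  | 13 => 1
  | 14 => 0
  | 15 => 0
  | _ => 0 end.
Definition I1 (s : nat) : int :=
  match s with
  | 0 => 0
  | 1 => 0
  | 2 => 0
  | 3 => 1
  | 4 => 0
  | 5 => 0
  | 6 => 0
  | 7 => 1
  | 8 => 0
  | 9 => 1
  | 10 => 0
  | 11 => 0
  | 12 => 0
  | 13 => 1
  | 14 => 0
  | 15 => 0
  | _ => 0 end.
Definition J1 (s : nat) : int :=
  match s with
  | 0 => 0
  | 1 => 1
  | 2 => 0
  | 3 => 0
  | 4 => 0
  | 5 => 1
  | 6 => 0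
  | 7 => 0
  | 8 => 0
  | 9 => 0
  | 10 => 0
  | 11 => 1
  | 12 => 0
  | 13 => 0
  | 14 => 0
  | 15 => 1
  | _ => 0 end.
Definition M2 (s : nat) : int :=
  match s with
  | 0 => 0
  | 1 => 0
  | 2 => 0
  | 3 => 0
  | 4 => 1
  | 5 => 1
  | 6 => 0
  | 7 => 0
  | 8 => 0
  | 9 => 0
  | 10 => 0
  | 11 => 0
  | 12 => 0
  | 13 => 0
  | 14 => 0
  | 15 => 0
  | _ => 0 end.
Definition I3 (s : nat) : int :=
  match s with
  | 0 => 0
  | 1 => 0
  | 2 => 0
  | 3 => 1
  | 4 => 0
  | 5 => 1
  | 6 => 0
  | 7 => 0
  | 8 => 0
  | 9 => 0
  | 10 => 0
  | 11 => 1
  | 12 => 0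
  | 13 => 0
  | 14 => 0
  | 15 => 0
  | _ => 0 end.
Definition J3 (s : nat) : int :=
  match s with
  | 0 => 0
  | 1 => 1
  | 2 => 0
  | 3 => 0
  | 4 => 0
  | 5 => 0
  | 6 => 0
  | 7 => 1
  | 8 => 0
  | 9 => 1
  | 10 => 0
  | 11 => 0
  | 12 => 0
  | 13 => 1
  | 14 => 0
  | 15 => 1
  | _ => 0 end.
Definition M4 (s : nat) : int :=
  match s with
  | 0 => 0
  | 1 => 0
  | 2 => 1
  | 3 => 1
  | 4 => 0
  | 5 => 0
  | 6 => 0
  | 7 => 0
  | 8 => 1
  | 9 => 1
  | 10 => 0
  | 11 => 0
  | 12 => 0
  | 13 => 0
  | 14 => 0
  | 15 => 0
  | _ => 0 end.
Definition I5 (s : nat) : int :=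
  match s with
  | 0 => 0
  | 1 => 0
  | 2 => 0
  | 3 => 0
  | 4 => 0
  | 5 => 1
  | 6 => 0
  | 7 => 1
  | 8 => 0
  | 9 => 0
  | 10 => 0
  | 11 => 0
  | 12 => 0
  | 13 => 1
  | 14 => 0
  | 15 => 0
  | _ => 0 end.
Definition J5 (s : nat) : int :=
  match s with
  | 0 => 0
  | 1 => 1
  | 2 => 0
  | 3 => 1
  | 4 => 0
  | 5 => 0
  | 6 => 0
  | 7 => 0
  | 8 => 0
  | 9 => 1
  | 10 => 0
  | 11 => 1
  | 12 => 0
  | 13 => 0
  | 14 => 0
  | 15 => 1
  | _ => 0 end.

Lemma finite_contra (W : nat -> nat -> int)
  (hW : forall s t, 0 <= W s t)
  (h1 : Q W Fx Fx = 2) (h2 : Q W Fa Fa = 2) (h3 : Q W Fb Fb = 2)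
  (h4 : Q W Fa Fx = 1) (h5 : Q W Fb Fx = 1) (h6 : Q W Fa Fb = 0)
  (h7 : Q W Fp Fx = 1) (h8 : Q W Fp Fa = 1) (h9 : Q W Fp Fb = 1)
  (h10 : Q W M0 M0 <> 1)
  (h11 : Q W I1 I1 = 0 \/ Q W J1 J1 = 0 \/ Q W I1 J1 <= -1)
  (h12 : Q W M2 M2 <> 1)
  (h13 : Q W I3 I3 = 0 \/ Q W J3 J3 = 0 \/ Q W I3 J3 <= -1)
  (h14 : Q W M4 M4 <> 1)
  (h15 : Q W I5 I5 = 0 \/ Q W J5 J5 = 0 \/ Q W I5 J5 <= -1) : False.
Proof.
rewrite /Q unlock /= in h1 h2 h3 h4 h5 h6 h7 h8 h9 h10 h11 h12 h13 h14 h15.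
move: (hW 0%N 1%N) (hW 0%N 2%N) (hW 0%N 3%N) (hW 0%N 4%N) (hW 0%N 5%N) (hW 0%N 6%N) (hW 0%N 7%N) (hW 0%N 8%N) (hW 0%N 9%N) (hW 0%N 10%N) (hW 0%N 11%N) (hW 0%N 12%N) (hW 0%N 13%N) (hW 0%N 14%N) (hW 0%N 15%N) (hW 1%N 2%N) (hW 1%N 3%N) (hW 1%N 4%N) (hW 1%N 5%N) (hW 1%N 6%N) (hW 1%N 7%N) (hW 1%N 8%N) (hW 1%N 9%N) (hW 1%N 10%N) (hW 1%N 11%N) (hW 1%N 12%N) (hW 1%N 13%N) (hW 1%N 14%N) (hW 1%N 15%N) (hW 2%N 3%N) (hW 2%N 4%N) (hW 2%N 5%N) (hW 2%N 6%N) (hW 2%N 7%N) (hW 2%N 8%N) (hW 2%N 9%N) (hW 2%N 10%N) (hW 2%N 11%N) (hW 2%N 12%N) (hW 2%N 13%N) (hW 2%N 14%N) (hW 2%N 15%N) (hW 3%N 4%N) (hW 3%N 5%N) (hW 3%N 6%N) (hW 3%N 7%N) (hW 3%N 8%N) (hW 3%N 9%N) (hW 3%N 10%N) (hW 3%N 11%N) (hW 3%N 12%N) (hW 3%N 13%N) (hW 3%N 14%N) (hW 3%N 15%N) (hW 4%N 5%N) (hW 4%N 6%N) (hW 4%N 7%N) (hW 4%N 8%N) (hW 4%N 9%N) (hW 4%N 10%N) (hW 4%N 11%N) (hW 4%N 12%N) (hW 4%N 13%N) (hW 4%N 14%N) (hW 4%N 15%N) (hW 5%N 6%N) (hW 5%N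 7%N) (hW 5%N 8%N) (hW 5%N 9%N) (hW 5%N 10%N) (hW 5%N 11%N) (hW 5%N 12%N) (hW 5%N 13%N) (hW 5%N 14%N) (hW 5%N 15%N) (hW 6%N 7%N) (hW 6%N 8%N) (hW 6%N 9%N) (hW 6%N 10%N) (hW 6%N 11%N) (hW 6%N 12%N) (hW 6%N 13%N) (hW 6%N 14%N) (hW 6%N 15%N) (hW 7%N 8%N) (hW 7%N 9%N) (hW 7%N 10%N) (hW 7%N 11%N) (hW 7%N 12%N) (hW 7%N 13%N) (hW 7%N 14%N) (hW 7%N 15%N) (hW 8%N 9%N) (hW 8%N 10%N) (hW 8%N 11%N) (hW 8%N 12%N) (hW 8%N 13%N) (hW 8%N 14%N) (hW 8%N 15%N) (hW 9%N 10%N) (hW 9%N 11%N) (hW 9%N 12%N) (hW 9%N 13%N) (hW 9%N 14%N) (hW 9%N 15%N) (hW 10%N 11%N) (hW 10%N 12%N) (hW 10%N 13%N) (hW 10%N 14%N) (hW 10%N 15%N) (hW 11%N 12%N) (hW 11%N 13%N) (hW 11%N 14%N) (hW 11%N 15%N) (hW 12%N 13%N) (hW 12%N 14%N) (hW 12%N 15%N) (hW 13%N 14%N) (hW 13%N 15%N) (hW 14%N 15%N).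
lia.
Qed.

Lemma irr_split r (s : 'rV[int]_r) z x y : irreducible_vec (orth_lattice s) z ->
  orth_lattice s x -> orth_lattice s y -> z = x + y ->
  dotz x x = 0 \/ dotz y y = 0 \/ dotz x y <= -1.
Proof.
move=> [_ [_ h]] hx hy E.
have [x0|x0] := eqVneq x 0; first by left; rewrite x0 dotz0l.
have [y0|y0] := eqVneq y 0; first by right; left; rewrite y0 dotz0l.
by right; right; apply: h.
Qed.

Lemma Wt_sym r m (v : 'I_m -> 'rV[int]_r) tau s t : Wt v tau s t = Wt v tau t s.
Proof.
rewrite /Wt exchange_big; apply: eq_bigr => i _; apply: eq_bigr => j _.
by rewrite wt_sym andbC.
Qed.

Lemma Wt_ge0 r m (v : 'I_m -> 'rV[int]_r)
  (hob : forall i j, i != j -> dotz (v i) (v j) <= 0) tau s t : 0 <= Wt v tau s t.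
Proof.
apply: sumr_ge0 => i _; apply: sumr_ge0 => j _; case: ifP => // _; exact: wt_ge0.
Qed.

Lemma dot_Q r m (v : 'I_m -> 'rV[int]_r) (hsum : \sum_(i < m) v i = 0)
  (tau : 'I_m -> nat) (htau : forall i, (tau i < 16)%N) (F G : nat -> int) :
  dotz (pot v (fun i => F (tau i))) (pot v (fun i => G (tau i))) = Q (Wt v tau) F G.
Proof.
have E := pot_dot hsum (fun i => F (tau i)) (fun i => G (tau i)).
rewrite type_red // in E.
rewrite (@sym_sum 16 (fun s t => Wt v tau s t * ((F s - F t) * (G s - G t)))) in E;
  last 2 first.
- by move=> s t; rewrite Wt_sym; congr (_ * _); ring.
- by move=> s; rewrite !subrr mul0r mulr0.
by apply: (@mulfI _ 2) => //; rewrite E.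
Qed.

Lemma IJ1 s : Fp s = I1 s + J1 s.
Proof. by do 16! (case: s => [|s]; first by []). Qed.
Lemma IJ3 s : Fp s = I3 s + J3 s.
Proof. by do 16! (case: s => [|s]; first by []). Qed.
Lemma IJ5 s : Fp s = I5 s + J5 s.
Proof. by do 16! (case: s => [|s]; first by []). Qed.

Lemma key r (s : 'rV[int]_r) (hcm : changemaker s) m (v : 'I_m -> 'rV[int]_r)
  (hL : forall i, orth_lattice s (v i))
  (hspan : forall x, orth_lattice s x -> exists c : 'I_m -> int, x = \sum_(i < m) c i *: v i)
  (hob : forall i j, i != j -> dotz (v i) (v j) <= 0)
  (hsum : \sum_(i < m) v i = 0) z t a b :
  irreducible_vec (orth_lattice s) z -> orth_lattice s t -> orth_lattice s a ->
  orth_lattice s b ->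
  dotz t t = 2 -> dotz a a = 2 -> dotz b b = 2 -> dotz a t = 1 -> dotz b t = 1 ->
  dotz a b = 0 -> dotz z t = 1 -> dotz z a = 1 -> dotz z b = 1 -> False.
Proof.
move=> hz ht ha hb htt haa hbb hat hbt hab hzt hza hzb.
have [p [hp Ez]] := lemG hL hspan hob hsum hz.
have [q [hq Et]] := lemG hL hspan hob hsum (root_irr hcm ht htt).
have [qa [hqa Ea]] := lemG hL hspan hob hsum (root_irr hcm ha haa).
have [qb [hqb Eb]] := lemG hL hspan hob hsum (root_irr hcm hb hbb).
pose tau i := ((p i == 1) + 2 * (q i == 1) + 4 * (qa i == 1) + 8 * (qb i == 1))%N.
have htau : forall i, (tau i < 16)%N.
  by move=> i; rewrite /tau; case: (p i == 1); case: (q i == 1); case: (qa i == 1);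
    case: (qb i == 1).
have eP : z = pot v (fun i => Fp (tau i)).
  rewrite Ez; apply: eq_bigr => i _; congr (_ *: _); rewrite /tau.
  by case: (hp i) => ->; case: (hq i) => ->; case: (hqa i) => ->; case: (hqb i) => ->.
have eT : t = pot v (fun i => Fx (tau i)).
  rewrite Et; apply: eq_bigr => i _; congr (_ *: _); rewrite /tau.
  by case: (hp i) => ->; case: (hq i) => ->; case: (hqa i) => ->; case: (hqb i) => ->.
have eA : a = pot v (fun i => Fa (tau i)).
  rewrite Ea; apply: eq_bigr => i _; congr (_ *: _); rewrite /tau.
  by case: (hp i) => ->; case: (hq i) => ->; case: (hqa i) => ->; case: (hqb i) => ->.
have eB : b = pot v (fun i => Fb (tau i)).
  rewrite Eb; apply: eq_bigr => i _; congr (_ *: _); rewrite /tau.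
  by case: (hp i) => ->; case: (hq i) => ->; case: (hqa i) => ->; case: (hqb i) => ->.
rewrite eP in hz hzt hza hzb; rewrite eT in htt hat hbt hzt;
rewrite eA in haa hat hab hza; rewrite eB in hbb hbt hab hzb.
rewrite !dot_Q // in htt haa hbb hat hbt hab hzt hza hzb.
have hirr : forall I J : nat -> int, (forall s, Fp s = I s + J s) ->
    Q (Wt v tau) I I = 0 \/ Q (Wt v tau) J J = 0 \/ Q (Wt v tau) I J <= -1.
  move=> I J hIJ; rewrite -!dot_Q //.
  apply: (irr_split hz) (orth_pot hL _) (orth_pot hL _) _.
  rewrite potD; apply: eq_bigr => i _; congr (_ *: _); exact: hIJ.
have hmn : forall M : nat -> int, Q (Wt v tau) M M <> 1.
  by move=> M; rewrite -dot_Q //; apply: (minnorm hcm) (orth_pot hL _).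
exact: (finite_contra (Wt_ge0 hob tau) htt haa hbb hat hbt hab hzt hza hzb
  (hmn M0) (hirr _ _ IJ1) (hmn M2) (hirr _ _ IJ3) (hmn M4) (hirr _ _ IJ5)).
Qed.

Lemma dotz_delta r (x : 'rV[int]_r) l : dotz x (delta_mx ord0 l) = x ord0 l.
Proof.
rewrite /dotz (bigD1 l) //= mxE !eqxx mulr1 big1 ?addr0 // => j /negPf hj.
by rewrite mxE hj andbF mulr0.
Qed.

Lemma delta_ent r (a c : 'I_r) : (delta_mx ord0 a : 'rV[int]_r) ord0 c = (c == a)%:R.
Proof. by rewrite mxE eqxx. Qed.

Lemma irr_opp r (s : 'rV[int]_r) z :
  irreducible_vec (orth_lattice s) z -> irreducible_vec (orth_lattice s) (- z).
Proof.
move=> [hL [h0 h]]; split; first exact: orthN.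
split; first by rewrite oppr_eq0.
move=> x y hx hy hx0 hy0 E.
have := h (- x) (- y) (orthN hx) (orthN hy); rewrite !oppr_eq0 => /(_ hx0 hy0).
rewrite -opprD -E opprK dotzNl dotzNr opprK; exact.
Qed.

Lemma half r (s : 'rV[int]_r) (hcm : changemaker s) m (v : 'I_m -> 'rV[int]_r)
  (hL : forall i, orth_lattice s (v i))
  (hspan : forall x, orth_lattice s x -> exists c : 'I_m -> int, x = \sum_(i < m) c i *: v i)
  (hob : forall i j, i != j -> dotz (v i) (v j) <= 0)
  (hsum : \sum_(i < m) v i = 0) (i0 i1 i2 i3 : 'I_r)
  (h01 : val i1 = (val i0).+1) (h12 : val i2 = (val i1).+1)
  (h23 : val i3 = (val i2).+1)
  (hs01 : s ord0 i0 = s ord0 i1) (hs12 : s ord0 i1 = s ord0 i2)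
  (hs23 : s ord0 i2 = s ord0 i3) z :
  irreducible_vec (orth_lattice s) z ->
  z ord0 i0 = z ord0 i1 -> z ord0 i2 = z ord0 i3 ->
  ~ (1 <= z ord0 i0 - z ord0 i2).
Proof.
move=> hz hz01 hz23 hd.
have neq : forall a b : 'I_r, val a != val b -> (a == b) = false.
  by move=> a b hab; apply/negbTE; apply: contra hab => /eqP ->.
have n01 : (i0 == i1) = false by apply: neq; rewrite h01; lia.
have n02 : (i0 == i2) = false by apply: neq; rewrite h12 h01; lia.
have n03 : (i0 == i3) = false by apply: neq; rewrite h23 h12 h01; lia.
have n12 : (i1 == i2) = false by apply: neq; rewrite h12; lia.
have n13 : (i1 == i3) = false by apply: neq; rewrite h23 h12; lia.
have n23 : (i2 == i3) = false by apply: neq; rewrite h23; lia.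
have n10 : (i1 == i0) = false by rewrite eq_sym.
have n20 : (i2 == i0) = false by rewrite eq_sym.
have n30 : (i3 == i0) = false by rewrite eq_sym.
have n21 : (i2 == i1) = false by rewrite eq_sym.
have n31 : (i3 == i1) = false by rewrite eq_sym.
have n32 : (i3 == i2) = false by rewrite eq_sym.
pose e l : 'rV[int]_r := delta_mx ord0 l.
have hdot : forall a b c d, dotz (e a - e b) (e c - e d) =
    (c == a)%:R - (d == a)%:R - ((c == b)%:R - (d == b)%:R).
  by move=> a b c d; rewrite dotzBl !dotzBr !dotz_delta !delta_ent.
have hzd : forall a b, dotz z (e a - e b) = z ord0 a - z ord0 b.
  by move=> a b; rewrite dotzBr !dotz_delta.
have hL2 : forall a b, s ord0 a = s ord0 b -> orth_lattice s (e a - e b).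
  by move=> a b hab; rewrite /orth_lattice dotzBl !(dotzC (e _)) !dotz_delta hab subrr.
case: (ltrP 1 (z ord0 i0 - z ord0 i2)) => hd2.
  have hx := hL2 i0 i2 (etrans hs01 hs12).
  have hy := orthB hz.1 hx.
  have E : z = (e i0 - e i2) + (z - (e i0 - e i2)) by rewrite addrC subrK.
  case: (irr_split hz hx hy E) => [hxx|[hyy|hxy]].
  - move: hxx; rewrite hdot !eqxx n20 n02 /= => H; clear -H; lia.
  - have := dotz_eq0 hyy => /eqP; rewrite subr_eq0 => /eqP Hz.
    move: hz01; rewrite Hz !mxE !eqxx ?n01 ?n02 ?n10 ?n20 ?n12 ?n21 /= => /eqP; rewrite !subr0 oner_eq0 //.
  - move: hxy; rewrite dotzBr (dotzC _ z) hzd hdot !eqxx n20 n02 /= => H; clear -H hd2; lia.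
have hd1 : z ord0 i0 - z ord0 i2 = 1 by clear -hd hd2; lia.
apply: (key hcm hL hspan hob hsum hz (hL2 i1 i2 hs12) (hL2 i0 i2 (etrans hs01 hs12))
         (hL2 i1 i3 (etrans hs12 hs23))).
all: rewrite ?hdot ?hzd ?eqxx ?n01 ?n02 ?n03 ?n12 ?n13 ?n23 ?n10 ?n20 ?n30 ?n21 ?n31 ?n32 /=.

all: clear -hd1 hz01 hz23; lia.
Qed.



Unset Implicit Arguments. Set Strict Implicit.

Theorem proposition4p8 (r : nat) (s : 'rV[int]_r) (hr : (0 < r)%N)
  (hcm : changemaker s)
  (hlast : forall i : 'I_r, val i = r.-1 -> 2 <= s ord0 i)
  (hsb : exists v : 'I_(r.-1).+1 -> 'rV[int]_r,
           obtuse_superbase (orth_lattice s) v)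
  (i0 i1 i2 i3 : 'I_r)
  (h01 : val i1 = (val i0).+1) (h12 : val i2 = (val i1).+1)
  (h23 : val i3 = (val i2).+1)
  (hs01 : s ord0 i0 = s ord0 i1) (hs12 : s ord0 i1 = s ord0 i2)
  (hs23 : s ord0 i2 = s ord0 i3)
  (z : 'rV[int]_r) (hz : irreducible_vec (orth_lattice s) z)
  (hz01 : z ord0 i0 = z ord0 i1) (hz23 : z ord0 i2 = z ord0 i3) :
  z ord0 i2 = z ord0 i1.
Proof.
case: hsb => v [hL [hspan [hob hsum]]].
have H := half hcm hL hspan hob hsum h01 h12 h23 hs01 hs12 hs23.
have H1 := H z hz hz01 hz23.
have H2 := H (- z) (irr_opp hz).
rewrite !mxE in H2.
have H2' := H2 (congr1 -%R hz01) (congr1 -%R hz23).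
have H3 : ~ (1 <= z ord0 i2 - z ord0 i0).
  by move=> h; apply: H2'; rewrite opprK addrC.
clear -H1 H3 hz01; lia.
Qed.
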